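(* Let $n\ge k\ge1$ be integers, $i\in\{1,\ldots,n\}$, and let $H\sim\text{Hyp}(n,i,k)$ and $X\sim\text{Bin}(k, \frac{i}{n})$. Let $H^{\ast}$ denote the random variable $H$ conditioned on the event $\{H\ge ik/n\}$, and $X^{\ast}$ the random variable $X$ conditioned on the event $\{X\ge ik/n\}$. Then $H^{\ast}\le_{st} X^{\ast}$. In particular, \[ \mathbb{E}(H\mid H\ge \mathbb{E}(H)) \le \mathbb{E}(X\mid X\ge \mathbb{E}(X) ). \]
   Context: $\text{Hyp}(n,i,k)$ denotes the hypergeometric distribution: the number of black marbles in a sample without replacement of size $k$ from an urn with $i$ black and $n-i$ white marbles, i.e. $\mathbb{P}(H=j)=\binom{i}{j}\binom{n-i}{k-j}/\binom{n}{k}$, with mean $ik/n$. $\text{Bin}(k,p)$ is the binomial distribution. For random variables $U,V$, $U\le_{st}V$ (usual stochastic order) means $\mathbb{P}(U\ge t)\le\mathbb{P}(V\ge t)$ for all $t\in\mathbb{R}$. *)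

(* Defs.v *)
From HB Require Import structures.
From mathcomp Require Import all_boot all_order all_algebra.
Set Implicit Arguments. Unset Strict Implicit. Unset Printing Implicit Defensive.
Import Order.TTheory GRing.Theory Num.Theory.
Local Open Scope ring_scope.

Definition hyp_pmf (R : realFieldType) (n i k j : nat) : R :=
  ('C(i, j) * 'C(n - i, k - j))%:R / ('C(n, k))%:R.

Definition bin_pmf (R : realFieldType) (k : nat) (p : R) (j : nat) : R :=
  ('C(k, j))%:R * p ^+ j * (1 - p) ^+ (k - j).

Definition tail (R : realFieldType) (k : nat) (f : nat -> R) (t : R) : R :=
  \sum_(j < k.+1 | t <= j%:R) f j.

Definition cond_tail (R : realFieldType) (k : nat) (f : nat -> R) (m t : R) : R :=
  (\sum_(j < k.+1 | (t <= j%:R) && (m <= j%:R)) f j) / tail k f m.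

Definition cond_exp (R : realFieldType) (k : nat) (f : nat -> R) (m : R) : R :=
  (\sum_(j < k.+1 | m <= j%:R) j%:R * f j) / tail k f m.

Definition cond_st_le (R : realFieldType) (k : nat) (f g : nat -> R) (m : R) : Prop :=
  forall t : R, cond_tail k f m t <= cond_tail k g m t.

(* Main.v *)
Require Import Defs.
From HB Require Import structures.
From mathcomp Require Import all_boot all_order all_algebra.
From mathcomp Require Import zify ring lra.
Import Order.TTheory GRing.Theory Num.Theory.
Local Open Scope ring_scope.
Local Close Scope ring_scope.

Lemma core_ineq (n k i a : nat) : (i <= n)%N -> (a.+1 <= k)%N -> (i*k <= a*n)%N ->
 ('C(i,a.+1) * 'C(n-i,k-a.+1) * 'C(k,a) * (n-i) <= 'C(i,a) * 'C(n-i,k-a) * 'C(k,a.+1) * i)%N.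
Proof.
move=> hin hak hm.
set x := (k - a.+1)%N.
have hx : (k - a = x.+1)%N by rewrite /x; lia.
rewrite hx.
have H1 := mul_bin_left i a.
have H2 := mul_bin_left k a.
have H3 := mul_bin_left (n-i) x.
rewrite -(@leq_pmul2r (a.+1 * x.+1)) //.
have -> : ('C(i, a.+1) * 'C(n - i, x) * 'C(k, a) * (n - i) * (a.+1 * x.+1)
   = (a.+1 * 'C(i, a.+1)) * 'C(n - i, x) * 'C(k, a) * (n - i) * x.+1)%N by ring.
have -> : ('C(i, a) * 'C(n - i, x.+1) * 'C(k, a.+1) * i * (a.+1 * x.+1)
   = 'C(i, a) * (x.+1 * 'C(n - i, x.+1)) * (a.+1 * 'C(k, a.+1)) * i)%N by ring.
rewrite H1 H2 H3 hx.
have -> : ((i - a) * 'C(i, a) * 'C(n - i, x) * 'C(k, a) * (n - i) * x.+1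
  = ((i - a) * (n - i)) * ('C(i, a) * 'C(n - i, x) * 'C(k, a) * x.+1))%N by ring.
have -> : ('C(i, a) * ((n - i - x) * 'C(n - i, x)) * (x.+1 * 'C(k, a)) * i
  = ((n - i - x) * i) * ('C(i, a) * 'C(n - i, x) * 'C(k, a) * x.+1))%N by ring.
case: (leqP x (n-i)) => hxn.
  apply: leq_mul => //; nia.
by rewrite (bin_small hxn) !(muln0, mul0n).
Qed.

Definition NN n i k j := ('C(i,j) * 'C(n-i,k-j))%N.
Definition BB n i k j := ('C(k,j) * i^j * (n-i)^(k-j))%N.

Lemma step_ineq (n k i a : nat) : (i <= n)%N -> (a.+1 <= k)%N -> (i*k <= a*n)%N ->
  (NN n i k a.+1 * BB n i k a <= NN n i k a * BB n i k a.+1)%N.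
Proof.
move=> hin hak hm; rewrite /NN /BB.
have hx : (k - a = (k - a.+1).+1)%N by lia.
rewrite hx expnS expnS.
have := @core_ineq n k i a hin hak hm; rewrite hx => H.
have -> : ('C(i, a.+1) * 'C(n - i, k - a.+1) * ('C(k, a) * i ^ a * ((n - i) * (n - i) ^ (k - a.+1)))
  = ('C(i, a.+1) * 'C(n - i, k - a.+1) * 'C(k, a) * (n - i)) * (i^a * (n - i) ^ (k - a.+1)))%N by ring.
have -> : ('C(i, a) * 'C(n - i, (k - a.+1).+1) * ('C(k, a.+1) * (i * i ^ a) * (n - i) ^ (k - a.+1))
  = ('C(i, a) * 'C(n - i, (k - a.+1).+1) * 'C(k, a.+1) * i) * (i^a * (n - i) ^ (k - a.+1)))%N by ring.
by apply: leq_mul.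
Qed.

Lemma cross_nat (n k i a d : nat) : (1 <= i)%N -> (i <= n)%N -> (k <= n)%N -> (a <= d)%N -> (d <= k)%N ->
  (i*k <= a*n)%N -> (NN n i k d * BB n i k a <= NN n i k a * BB n i k d)%N.
Proof.
move=> hi hin hkn had hdk hm.
case: (ltnP i n) => hlt; last first.
  have hn : i = n by lia.
  have ha : a = k by subst; nia.
  have hd : d = k by lia.
  by rewrite ha hd.
have Bpos : forall j, (j <= k)%N -> (0 < BB n i k j)%N.
  move=> j hj; rewrite /BB !muln_gt0 bin_gt0 hj !expn_gt0; apply/andP; split; lia.
move: hdk; rewrite -(subnKC had); elim: (d - a)%N => [|e IH] hdk.
  by rewrite addn0.
rewrite addnS in hdk *.
have IH' := IH (ltnW hdk).
have hst := @step_ineq n k i (a + e) hin hdk (leq_trans hm (leq_mul (leq_addr _ _) (leqnn _))).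
have bp := Bpos (a+e)%N (ltnW hdk).
rewrite -(@leq_pmul2r (BB n i k (a+e))) //.
apply: (leq_trans (n := NN n i k (a + e) * BB n i k (a+e).+1 * BB n i k a)).
  rewrite mulnAC; apply: leq_mul => //.
have -> : (NN n i k a * BB n i k (a + e).+1 * BB n i k (a + e) = NN n i k a * BB n i k (a + e) * BB n i k (a + e).+1)%N by ring.
rewrite mulnAC; apply: leq_mul => //.
Qed.
Local Open Scope ring_scope.

Lemma cross_sum (R : realFieldType) (K : nat) (S : pred nat) (f g w : nat -> R) :
 (forall j, 0 <= f j) -> (forall j, 0 <= g j) ->
 (forall a d : nat, (a < K)%N -> (d < K)%N -> S a -> S d -> (a <= d)%N -> f d * g a <= f a * g d) ->
 (forall a d : nat, (a <= d)%N -> w a <= w d) ->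
 (\sum_(j < K | S j) w j * f j) * (\sum_(j < K | S j) g j) <=
 (\sum_(j < K | S j) w j * g j) * (\sum_(j < K | S j) f j).
Proof.
move=> f0 g0 cr wm.
pose F (d a : 'I_K) := w d * g d * f a - w d * f d * g a.
rewrite -subr_ge0.
have E : (\sum_(j < K | S j) w j * g j) * (\sum_(j < K | S j) f j)
   - (\sum_(j < K | S j) w j * f j) * (\sum_(j < K | S j) g j)
   = \sum_(d < K | S d) \sum_(a < K | S a) F d a.
  rewrite !big_distrl -sumrB; apply: eq_bigr => d _.
  rewrite !big_distrr -sumrB; apply: eq_bigr => a _; by rewrite /F.
rewrite E.
have E2 : \sum_(d < K | S d) \sum_(a < K | S a) F d a = \sum_(d < K | S d) \sum_(a < K | S a) F a d.
  exact: exchange_big.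
have P : 0 <= \sum_(d < K | S d) \sum_(a < K | S a) (F d a + F a d).
  apply: sumr_ge0 => d Sd; apply: sumr_ge0 => a Sa.
  have -> : F d a + F a d = (w d - w a) * (g d * f a - f d * g a) by rewrite /F; ring.
  case: (leqP a d) => h.
    apply: mulr_ge0; rewrite subr_ge0; first exact: wm.
    by rewrite [g d * _]mulrC; apply: cr.
  apply: mulr_le0; rewrite subr_le0; first exact: wm (ltnW h).
  by rewrite [g d * _]mulrC; apply: cr => //; exact: ltnW.
move: P; rewrite (eq_bigr (fun d => \sum_(a < K | S a) F d a + \sum_(a < K | S a) F a d)); last first.
  by move=> d _; rewrite big_split.
rewrite big_split /= -E2.
set T := \sum_(d < K | S d) _.
move=> h; have : 0 <= T *+ 2 by rewrite mulr2n.
by rewrite pmulrn_lge0.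
Qed.

Lemma sum_pos (R : realFieldType) (K : nat) (S : pred nat) (f : nat -> R) (j0 : nat) :
  (j0 < K)%N -> S j0 -> (forall j, 0 <= f j) -> 0 < f j0 -> 0 < \sum_(j < K | S j) f j.
Proof.
move=> hj S0 f0 fp.
rewrite (bigD1 (Ordinal hj)) //=.
apply: (lt_le_trans fp); rewrite lerDl; exact: sumr_ge0.
Qed.

Lemma div_le (R : realFieldType) (A B Tf Tg : R) : 0 < Tf -> 0 < Tg -> A * Tg <= B * Tf -> A / Tf <= B / Tg.
Proof. move=> hf hg h; by rewrite ler_pdivrMr // mulrAC ler_pdivlMr. Qed.

Theorem lemma6 (R : realFieldType) (n k i : nat) :
  (1 <= k)%N -> (k <= n)%N -> (1 <= i)%N -> (i <= n)%N ->
  let m : R := (i * k)%:R / n%:R in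
  let p : R := i%:R / n%:R in
  cond_st_le k (hyp_pmf R n i k) (bin_pmf k p) m /\
  cond_exp k (hyp_pmf R n i k) m <= cond_exp k (bin_pmf k p) m.
Proof.
move=> hk hkn hi hin m p.
have n0 : (0 < n)%N by lia.
have n0R : 0 < n%:R :> R by rewrite ltr0n.
have hf : forall j, hyp_pmf R n i k j = (NN n i k j)%:R / ('C(n,k))%:R by [].
have hg : forall j, bin_pmf k p j = (BB n i k j)%:R / (n^k)%:R.
  move=> j; rewrite /bin_pmf /BB /p.
  case: (leqP j k) => hj; last first.
    by rewrite bin_small // !mul0n !mul0r.
  have -> : 1 - i%:R / n%:R = (n - i)%N%:R / n%:R :> R.
    rewrite natrB // mulrBl divff //; exact: lt0r_neq0.
  rewrite !expr_div_n !natrM !natrX.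
  have -> : (n%:R : R) ^+ k = n%:R ^+ j * n%:R ^+ (k - j) by rewrite -exprD subnKC.
  field; apply/andP; split; apply: expf_neq0; exact: lt0r_neq0 n0R.
have f0 : forall j, 0 <= hyp_pmf R n i k j by move=> j; rewrite hf divr_ge0.
have g0 : forall j, 0 <= bin_pmf k p j by move=> j; rewrite hg divr_ge0.
have Sm : forall a : nat, (m <= a%:R) = (i * k <= a * n)%N.
  by move=> a; rewrite /m ler_pdivrMr // -natrM ler_nat.
have cr : forall a d : nat, (a < k.+1)%N -> (d < k.+1)%N -> m <= a%:R -> m <= d%:R -> (a <= d)%N ->
    hyp_pmf R n i k d * bin_pmf k p a <= hyp_pmf R n i k a * bin_pmf k p d.
  move=> a d ha hd Sa _ had; rewrite !hf !hg !mulf_div.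
  apply: ler_wpM2r; first by rewrite invr_ge0 mulr_ge0.
  rewrite -!natrM ler_nat; apply: cross_nat => //; last by rewrite -Sm.
have Tf : 0 < tail k (hyp_pmf R n i k) m.
  rewrite /tail; apply: (@sum_pos R k.+1 (fun j : nat => m <= j%:R) _ (minn i k)) => //.
    by rewrite ltnS geq_minr.
    by rewrite Sm; nia.
  rewrite hf; apply: divr_gt0; rewrite ltr0n ?bin_gt0 //; rewrite /NN muln_gt0 !bin_gt0; lia.
have Tg : 0 < tail k (bin_pmf k p) m.
  rewrite /tail; apply: (@sum_pos R k.+1 (fun j : nat => m <= j%:R) _ k) => //.
    by rewrite Sm; nia.
  rewrite hg; apply: divr_gt0; rewrite ltr0n ?expn_gt0 ?n0 //; rewrite /BB subnn binn expn0 muln1 mul1n expn_gt0; lia.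
split.
  move=> t; rewrite /cond_tail !big_mkcondl /=.
  apply: div_le => //.
  pose w (j : nat) : R := if t <= j%:R then 1 else 0.
  have E : forall F : nat -> R, \sum_(j < k.+1 | m <= j%:R) (if t <= j%:R then F j else 0)
      = \sum_(j < k.+1 | m <= j%:R) w j * F j.
    by move=> F; apply: eq_bigr => j _; rewrite /w; case: ifP; rewrite ?mul1r ?mul0r.
  rewrite (E (hyp_pmf R n i k)) (E (bin_pmf k p)) /tail.
  apply: (@cross_sum R k.+1 (fun j : nat => m <= j%:R) (hyp_pmf R n i k) (bin_pmf k p) w) => //.
  move=> a d had; rewrite /w; case: ifP => ha; last by case: ifP.
  have hd : t <= d%:R by apply: (le_trans ha); rewrite ler_nat.
  by rewrite hd lexx.
rewrite /cond_exp; apply: div_le => //.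
apply: (@cross_sum R k.+1 (fun j : nat => m <= j%:R) (hyp_pmf R n i k) (bin_pmf k p) (fun j : nat => j%:R)) => //.
by move=> a d had; rewrite ler_nat.
Qed.
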